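(* Let $X$ be an exponential vector space over a field $K$. Then: (i) for all $x\in X\smallsetminus X_0$, $x\in L(x)$ and $\uparrow L(x)=L(x)$; (ii) if $x,y\in X\smallsetminus X_0$ and $x\leq y$, then $L(x)\supseteq L(y)$; (iii) if $x=\alpha y+p$ for some $\alpha\in K\smallsetminus\{0\}$, $p\in X_0$ and $y\in X\smallsetminus X_0$, then $L(x)=L(y)$; (iv) $L(x)\cap X_0=\emptyset$ for all $x\in X\smallsetminus X_0$; (v) if $a\in L(b)$ (with $b\in X\smallsetminus X_0$) then $L(a)\subseteq L(b)$; (vi) for any $x,y\in X\smallsetminus X_0$, $L(x)\cap L(y)\neq\emptyset$.
   Context: An exponential vector space (evs) over a field $K$ is a partially ordered set $(X,\leq)$ with a binary operation $+$ on $X$ and a map $K\times X\to X$, $(\alpha,x)\mapsto \alpha x$, such that: (A1) $(X,+)$ is a commutative semigroup with identity $\theta$; (A2) $x\leq y$ implies $x+z\leq y+z$ and $\alpha x\leq \alpha y$ for all $z\in X$, $\alpha\in K$; (A3) $\alpha(x+y)=\alpha x+\alpha y$, $\alpha(\beta x)=(\alpha\beta)x$, $(\alpha+\beta)x\leq \alpha x+\beta x$, $1x=x$; (A4) $\alpha x=\theta$ iff $\alpha=0$ or $x=\theta$; (A5) $x+(-1)x=\theta$ iff $x\in X_0$, where $X_0:=\{z\in X: y\not\leq z \text{ for all } y\in X\smallsetminus\{z\}\}$ (the set of minimal elements, called the primitive space; it is a vector space over $K$); (A6) for each $x\in X$ there is $p\in X_0$ with $p\leq x$. For $x\in X\smallsetminus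 X_0$ let $L(x):=\{z\in X: z\geq \alpha x+p \text{ for some } \alpha\in K\smallsetminus\{0\},\ p\in X_0\}$. For a subset $S\subseteq X$, $\uparrow S:=\{z\in X: z\geq s \text{ for some } s\in S\}$. *)

(* Defs.v *)
From HB Require Import structures.
From mathcomp Require Import all_boot all_algebra.
Set Implicit Arguments. Unset Strict Implicit. Unset Printing Implicit Defensive.
Import GRing.Theory.
Local Open Scope ring_scope.

Section EVS.
Variables (K : fieldType) (X : Type).
Variables (le : X -> X -> Prop) (add : X -> X -> X) (theta : X)
          (smul : K -> X -> X).

(* X_0 : the primitive space = set of minimal elements of (X, le). *)
Definition primitive (z : X) : Prop := forall y : X, y <> z -> ~ le y z.

Definition Lset (x : X) (z : X) : Prop :=
  exists (a : K) (p : X), a != 0 /\ primitive p /\ le (add (smul a x) p) z.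

Definition upset (S : X -> Prop) (z : X) : Prop := exists s, S s /\ le s z.

Record is_evs : Prop := {
  evs_refl : forall x, le x x;
  evs_antisym : forall x y, le x y -> le y x -> x = y;
  evs_trans : forall x y z, le x y -> le y z -> le x z;
  evs_addA : forall x y z, add x (add y z) = add (add x y) z;
  evs_addC : forall x y, add x y = add y x;
  evs_add0 : forall x, add x theta = x;
  evs_le_add : forall x y z, le x y -> le (add x z) (add y z);
  evs_le_smul : forall (a : K) x y, le x y -> le (smul a x) (smul a y);
  evs_smulD : forall (a : K) x y, smul a (add x y) = add (smul a x) (smul a y);
  evs_smulA : forall (a b : K) x, smul a (smul b x) = smul (a * b) x;
  evs_smul_addle : forall (a b : K) x, le (smul (a + b) x) (add (smul a x) (smul b x));
  evs_smul1 : forall x, smul 1 x = x;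
  evs_smul_eq0 : forall (a : K) x, smul a x = theta <-> (a = 0 \/ x = theta);
  evs_neg : forall x, add x (smul (-1) x) = theta <-> primitive x;
  evs_prim_below : forall x, exists p, primitive p /\ le p x
}.
End EVS.

(* Main.v *)
Require Import Defs.
From HB Require Import structures.
From mathcomp Require Import all_boot all_algebra.
From Stdlib Require Import Classical.
Set Implicit Arguments. Unset Strict Implicit.
Import GRing.Theory.
Local Open Scope ring_scope.

Section Aux.
Variables (K : fieldType) (X : Type)
  (le : X -> X -> Prop) (add : X -> X -> X) (theta : X) (smul : K -> X -> X)
  (HX : is_evs le add theta smul).

Lemma smul_theta (b : K) : smul b theta = theta.
Proof. by apply/(evs_smul_eq0 HX); right. Qed.

Lemma prim_theta : primitive le theta.
Proof. apply/(evs_neg HX). by rewrite smul_theta (evs_add0 HX). Qed.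

Lemma prim_smul (b : K) p : primitive le p -> primitive le (smul b p).
Proof.
move=> Hp; apply/(evs_neg HX).
rewrite (evs_smulA HX) mulrC -(evs_smulA HX) -(evs_smulD HX).
by rewrite (proj2 (evs_neg HX p) Hp) smul_theta.
Qed.

Lemma prim_add p q : primitive le p -> primitive le q -> primitive le (add p q).
Proof.
move=> Hp Hq; apply/(evs_neg HX).
rewrite (evs_smulD HX).
have E: add (add p q) (add (smul (-1) p) (smul (-1) q)) =
        add (add p (smul (-1) p)) (add q (smul (-1) q)).
  rewrite -!(evs_addA HX); congr (add p _).
  by rewrite (evs_addC HX q) -(evs_addA HX) (evs_addC HX q).
by rewrite E (proj2 (evs_neg HX p) Hp) (proj2 (evs_neg HX q) Hq) (evs_add0 HX).
Qed.

Lemma prim_eq w z : primitive le z -> le w z -> w = z.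
Proof. move=> Hz Hw; apply: NNPP => Hne; exact: (Hz w Hne Hw). Qed.

Lemma le_addl x y z : le x y -> le (add z x) (add z y).
Proof. move=> H; rewrite !(evs_addC HX z); exact: (evs_le_add HX). Qed.

Lemma L_sub x y (a : K) p : a != 0 -> primitive le p -> y = add (smul a x) p ->
  forall z, Lset le add smul y z -> Lset le add smul x z.
Proof.
move=> Ha Hp -> z [b [q [Hb [Hq Hle]]]].
exists (b * a), (add (smul b p) q); split; first by rewrite mulf_neq0.
split; first by apply: prim_add => //; apply: prim_smul.
by rewrite (evs_addA HX) -(evs_smulA HX) -(evs_smulD HX).
Qed.

Lemma inv_rel y (a : K) p : a != 0 -> primitive le p ->
  y = add (smul (a^-1) (add (smul a y) p)) (smul (- a^-1) p).
Proof.
move=> Ha Hp.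
rewrite (evs_smulD HX) (evs_smulA HX) mulVf // (evs_smul1 HX) -(evs_addA HX).
have ->: - a^-1 = a^-1 * -1 by rewrite mulrN1.
by rewrite -(evs_smulA HX) -(evs_smulD HX) (proj2 (evs_neg HX p) Hp) smul_theta (evs_add0 HX).
Qed.

End Aux.

Theorem mainTheorem15 (K : fieldType) (X : Type)
  (le : X -> X -> Prop) (add : X -> X -> X) (theta : X) (smul : K -> X -> X)
  (HX : is_evs le add theta smul) :
  (* (i) *)
  (forall x, ~ primitive le x ->
     Lset le add smul x x /\
     (forall z, upset le (Lset le add smul x) z <-> Lset le add smul x z)) /\
  (* (ii) *)
  (forall x y, ~ primitive le x -> ~ primitive le y -> le x y ->
     forall z, Lset le add smul y z -> Lset le add smul x z) /\
  (* (iii) *)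
  (forall x y (a : K) p, a != 0 -> primitive le p -> ~ primitive le y ->
     x = add (smul a y) p ->
     forall z, Lset le add smul x z <-> Lset le add smul y z) /\
  (* (iv) *)
  (forall x, ~ primitive le x ->
     forall z, Lset le add smul x z -> ~ primitive le z) /\
  (* (v) *)
  (forall a b, ~ primitive le b -> Lset le add smul b a ->
     forall z, Lset le add smul a z -> Lset le add smul b z) /\
  (* (vi) *)
  (forall x y, ~ primitive le x -> ~ primitive le y ->
     exists z, Lset le add smul x z /\ Lset le add smul y z).
Proof.
have ii : forall x y, le x y ->
     forall z, Lset le add smul y z -> Lset le add smul x z.
  move=> x y Hxy z [a [p [Ha [Hp Hle]]]].
  exists a, p; split => //; split => //.
  apply: (evs_trans HX) Hle; apply: (evs_le_add HX); exact: (evs_le_smul HX).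
have iii : forall x y (a : K) p, a != 0 -> primitive le p ->
     x = add (smul a y) p ->
     forall z, Lset le add smul x z <-> Lset le add smul y z.
  move=> x y a p Ha Hp Hx z; split; first exact: (L_sub HX Ha Hp Hx).
  have Ha' : a^-1 != 0 by rewrite invr_eq0.
  have Hp' := prim_smul HX (b := - a^-1) Hp.
  have Hy : y = add (smul (a^-1) x) (smul (- a^-1) p).
    rewrite Hx; exact: (inv_rel HX y Ha Hp).
  exact: (L_sub HX Ha' Hp' Hy).
have iv : forall x, ~ primitive le x ->
     forall z, Lset le add smul x z -> ~ primitive le z.
  move=> x Hx z [a [p [Ha [Hp Hle]]]] Hz.
  have E := prim_eq Hz Hle.
  apply: Hx; rewrite (inv_rel HX x Ha Hp) E.
  by apply: (prim_add HX) => //; apply: (prim_smul HX).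
split.
  move=> x Hx; split.
    exists 1, theta; split; first exact: oner_neq0.
    split; first exact: (prim_theta HX).
    rewrite (evs_smul1 HX) (evs_add0 HX); exact: (evs_refl HX).
  move=> z; split.
    move=> [s [[a [p [Ha [Hp Hle]]]] Hsz]].
    exists a, p; split => //; split => //; exact: (evs_trans HX) Hsz.
  move=> Hz; exists z; split => //; exact: (evs_refl HX).
split; first by move=> x y _ _; apply: ii.
split; first by move=> x y a p Ha Hp _; apply: iii.
split; first exact: iv.
split.
  move=> a b Hb Hab z Haz.
  have Ha := iv b Hb a Hab.
  case: Hab => [c [p [Hc [Hp Hle]]]].
  apply/(iii (add (smul c b) p) b c p Hc Hp erefl).
  exact: ii Hle z Haz.
move=> x y Hx Hy.
case: (evs_prim_below HX y) => [p [Hp Hpy]].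
case: (evs_prim_below HX x) => [q [Hq Hqx]].
exists (add x y); split.
  exists 1, p; split; first exact: oner_neq0.
  split => //; rewrite (evs_smul1 HX); exact: (le_addl HX).
exists 1, q; split; first exact: oner_neq0.
split => //; rewrite (evs_smul1 HX) (evs_addC HX x); exact: (le_addl HX).
Qed.
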